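(* Let $m,n$ be positive integers, $\delta>0$, $t>0$. Let $k$ be the smallest integer satisfying $1+2+\dots+2^k\ge n$, let $n_j=2^j$ for $j\in[k-1]$ and let $n_k$ be defined so that $n=\sum_{j\in[k]}n_j$. Then $$\mathrm{GW}(\mathcal{M}^{\mathrm{right}}(m,n,\delta,t)) \leq \sum_{j\in[k]}\mathrm{GW}\Big(\mathcal{A}\big(m,\,n_j,\,2t\sqrt{m/n_j}+\delta,\,t\sqrt{m/n}+\delta,\,t\big)\Big).$$
   Context: For $\theta\in\mathbb{R}^{m\times n}$: $\mathrm{TV}_r(\theta) = \sum_{i\in[m]}\sum_{j\in[n-1]}|\theta[i,j+1]-\theta[i,j]|$, $\mathrm{TV}_c(\theta) = \mathrm{TV}_r(\theta^T)$, $\mathrm{TV}(\theta) = \mathrm{TV}_r(\theta)+\mathrm{TV}_c(\theta)$, $\|\cdot\|$ is the Frobenius norm. $\mathcal{M}^{\mathrm{right}}(m,n,\delta,t) = \{\theta\in\mathbb{R}^{m\times n}: \mathrm{TV}(\theta)\le\|\theta[\cdot,n]\|_1+\delta,\ \|\theta\|\le t\}$ and $\mathcal{A}(m,n,u,v,t) = \{\theta\in\mathbb{R}^{m\times n}: \mathrm{TV}_r(\theta)\le u,\ \mathrm{TV}_c(\theta)\le v,\ \|\theta\|\le t\}$. $\mathrm{GW}(A) = \mathbb{E}\sup_{v\in A}\langle Z,v\rangle$ with $Z$ a matrix of i.i.d. standard normals of matching size. *)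

(* Defs.v *)
From HB Require Import structures.
From mathcomp Require Import all_boot all_order all_algebra.
From mathcomp Require Import all_classical all_reals all_analysis.
Set Implicit Arguments. Unset Strict Implicit. Unset Printing Implicit Defensive.
Import Order.TTheory GRing.Theory Num.Theory.
Local Open Scope classical_set_scope.
Local Open Scope ring_scope.

Section Defs.
Variable R : realType.

Definition TVr (m n : nat) (th : 'M[R]_(m, n)) : R :=
  \sum_(i < m) \sum_(j1 < n) \sum_(j2 < n | val j2 == (val j1).+1)
     `|th i j2 - th i j1|.

Definition TVc (m n : nat) (th : 'M[R]_(m, n)) : R := TVr th^T.

Definition TV (m n : nat) (th : 'M[R]_(m, n)) : R := TVr th + TVc th.

Definition frob (m n : nat) (th : 'M[R]_(m, n)) : R :=
  Num.sqrt (\sum_(i < m) \sum_(j < n) th i j ^+ 2).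

Definition lastcol_l1 (m n : nat) (th : 'M[R]_(m, n)) : R :=
  \sum_(i < m) \sum_(j < n | val j == n.-1) `|th i j|.

Definition Mright (m n : nat) (delta t : R) : set 'M[R]_(m, n) :=
  [set th | TV th <= lastcol_l1 th + delta /\ frob th <= t].

Definition Aset (m n : nat) (u v t : R) : set 'M[R]_(m, n) :=
  [set th | TVr th <= u /\ TVc th <= v /\ frob th <= t].

(* Expectation of f(Z_1,...,Z_N) for Z_1..Z_N i.i.d. standard normal,
   computed as the iterated integral against the standard normal law. *)
Fixpoint gauss_iter (N : nat) (f : seq R -> \bar R) : \bar R :=
  match N with
  | 0 => f [::]
  | N'.+1 => (\int[normal_prob (0:R) 1]_x gauss_iter N' (fun s => f (x :: s)))%E
  end.

Definition mx_of_seq (m n : nat) (s : seq R) : 'M[R]_(m, n) :=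
  \matrix_(i < m, j < n) s`_(i * n + j).

Definition frob_inner (m n : nat) (A B : 'M[R]_(m, n)) : R :=
  \sum_(i < m) \sum_(j < n) A i j * B i j.

(* Gaussian width GW(A) = E sup_{v in A} <Z, v> *)
Definition GW (m n : nat) (A : set 'M[R]_(m, n)) : \bar R :=
  gauss_iter (m * n)
    (fun s => ereal_sup [set (frob_inner (mx_of_seq m n s) v)%:E | v in A]).

End Defs.

(* block sizes: n_j = 2^j for j < k, n_k = n - (2^0 + ... + 2^(k-1)) *)
Definition blk (n k j : nat) : nat := (if j < k then 2 ^ j else n - (2 ^ k - 1))%N.
Arguments Mright {R} m n delta t _.
Arguments Aset {R} m n u v t _.

(* Main.v *)
Require Import Defs.
From HB Require Import structures.
From mathcomp Require Import all_boot all_order all_algebra.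
From mathcomp Require Import all_classical all_reals all_analysis.
From mathcomp Require Import measurable_realfun ring lra zify.
Import Order.TTheory GRing.Theory Num.Theory.
Local Open Scope ring_scope.



Definition idxf (n o b q : nat) : nat := (q %/ b * n + o + q %% b)%N.
Definition idxl (m n o b : nat) : seq nat := mkseq (idxf n o b) (m * b).

Lemma idxf_lt n o b q : (0 < b)%N -> (o + b <= n)%N -> (idxf n o b q < (q %/ b).+1 * n)%N.
Proof.
move=> b0 obn; rewrite /idxf mulSn.
have := ltn_pmod q b0; lia.
Qed.

Lemma idxf_mono n o b q1 q2 : (0 < b)%N -> (o + b <= n)%N -> (q1 < q2)%N ->
  (idxf n o b q1 < idxf n o b q2)%N.
Proof.
move=> b0 obn q12.
have e1 := divn_eq q1 b; have e2 := divn_eq q2 b.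
have r1 := ltn_pmod q1 b0; have r2 := ltn_pmod q2 b0.
case: (ltngtP (q1 %/ b) (q2 %/ b)) => h.
- apply: leq_trans (idxf_lt _ _ _ _ b0 obn) _.
  rewrite /idxf; apply: leq_trans (leq_addr _ _); apply: leq_trans (leq_addr _ _).
  by rewrite leq_mul2r h orbT.
- have : (q2 %/ b * b + b <= q1 %/ b * b)%N by rewrite addnC -mulSn leq_mul2r h orbT.
  move: e1 e2 q12 r1 r2; set u1 := (q1 %/ b * b)%N; set u2 := (q2 %/ b * b)%N; lia.
- rewrite /idxf h.
  move: e1 e2 q12 r1 r2; rewrite h; set u := (q2 %/ b * b)%N; lia.
Qed.

Lemma idxl_sorted m n o b : (0 < b)%N -> (o + b <= n)%N -> sorted ltn (idxl m n o b).
Proof.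
move=> b0 obn; rewrite /idxl /mkseq.
apply: (homo_sorted (e := ltn)); last exact: iota_ltn_sorted.
by move=> x y; apply: idxf_mono.
Qed.

Lemma idxl_all m n o b : (0 < b)%N -> (o + b <= n)%N -> all (fun i => i < m * n)%N (idxl m n o b).
Proof.
move=> b0 obn; apply/allP => i /mapP[q]; rewrite mem_iota add0n => /andP[_ qm] ->.
apply: leq_trans (idxf_lt _ _ _ _ b0 obn) _.
by rewrite leq_mul2r ltn_divLR // qm orbT.
Qed.

Lemma idxl_mem m n o b i : (0 < b)%N -> (o + b <= n)%N -> i \in idxl m n o b ->
  (o <= i %% n < o + b)%N.
Proof.
move=> b0 obn /mapP[q _ ->]; rewrite /idxf -addnA modnMDl modn_small.
  by rewrite leq_addr ltn_add2l ltn_pmod.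
by have := ltn_pmod q b0; lia.
Qed.

Lemma idxl_nth m n o b i l : (l < b)%N -> (i < m)%N ->
  nth 0%N (idxl m n o b) (i * b + l) = (i * n + o + l)%N.
Proof.
move=> lb im; rewrite nth_mkseq /idxf.
  by rewrite divnMDl ?divn_small ?addn0 ?modnMDl ?modn_small //; lia.
apply: leq_trans (_ : (i.+1 * b <= m * b)%N); first by rewrite mulSn; lia.
by rewrite leq_mul2r im orbT.
Qed.

Section GaussPart.
Variable R : realType.
Import HBNNSimple.
Local Notation P := (normal_prob (0:R) 1).
Local Open Scope ereal_scope.

Lemma intP_le (f g : R -> \bar R) : (forall x, 0 <= f x) -> (forall x, f x <= g x) ->
  \int[P]_x f x <= \int[P]_x g x.
Proof.
move=> f0 fg.
have g0 : forall x, 0 <= g x by move=> x; exact: le_trans (f0 x) (fg x).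
rewrite !ge0_integralTE //; apply: le_ereal_sup => _ [h hf <-]; exists h => //= x.
exact: le_trans (hf x) (fg x).
Qed.

Lemma intP_cst (c : \bar R) : \int[P]_x (cst c x) = c.
Proof.
rewrite integral_cst //.
rewrite -[RHS]mule1; congr (_ * _).
exact: (@probability_setT _ _ R P).
Qed.

Lemma intP_addc (a : R -> \bar R) (c : \bar R) : (forall x, 0 <= a x) -> 0 <= c ->
  \int[P]_x (a x + c) <= \int[P]_x a x + c.
Proof.
move=> a0; case: c => [r| |] // r0.
- rewrite lee_fin in r0.
  rewrite ge0_integralTE; last by move=> x; exact: adde_ge0.
  apply: ge_ereal_sup => _ [h /= hf <-].
  have -> : sintegral P (HBNNSimple.NonNegSimpleFun.sort h) = \int[P]_x ((HBNNSimple.NonNegSimpleFun.sort h x)%:E).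
    by rewrite integral_nnsfun // patch_setT.
  set hh := HBNNSimple.NonNegSimpleFun.sort h.
  apply: (@le_trans _ _ (\int[P]_x ((Num.max (hh x - r) 0%R)%:E + r%:E)%E)).
    apply: intP_le => x; first by rewrite lee_fin; exact: (@fun_ge0 _ _ h x).
    by rewrite -EFinD lee_fin -lerBlDr le_max lexx.
  rewrite (@ge0_integralD _ _ _ P setT measurableT (fun x => (Num.max (hh x - r) 0%R)%:E) (fun=> r%:E)); last first.
  - exact: measurable_cst.
  - by move=> x _; rewrite lee_fin.
  - apply/measurable_EFinP; apply: measurable_maxr; last exact: measurable_cst.
    apply: measurable_funB; [exact: measurable_funPT|exact: measurable_cst].
  - by move=> x _; rewrite lee_fin le_max lexx orbT.
  rewrite (intP_cst r%:E) leeD2r //.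
  apply: intP_le => x; first by rewrite lee_fin le_max lexx orbT.
  move: (hf x) (a0 x); case: (a x) => [ax| |] //; rewrite ?leey // !lee_fin => hax ax0.
  by rewrite ge_max ax0 andbT lerBlDr.
- rewrite addey ?leey // -ltNye (lt_le_trans (ltNyr 0%R)) // integral_ge0 // => x _; exact: a0.
Qed.


Definition dep (S : pred nat) (f : seq R -> \bar R) :=
  forall s s', (forall i, S i -> nth 0%R s i = nth 0%R s' i) -> f s = f s'.

Lemma gauss_iter_ge0 N (f : seq R -> \bar R) : (forall s, 0 <= f s) -> 0 <= gauss_iter N f.
Proof.
elim: N f => [|N IH] f f0 /=; first exact: f0.
by apply: integral_ge0 => x _; apply: IH.
Qed.

Lemma gauss_iter_le N (f g : seq R -> \bar R) : (forall s, 0 <= f s) -> (forall s, f s <= g s) ->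
  gauss_iter N f <= gauss_iter N g.
Proof.
elim: N f g => [|N IH] f g f0 fg /=; first exact: fg.
apply: intP_le => x; first exact: gauss_iter_ge0.
by apply: IH.
Qed.

Lemma gauss_iter_ext N (f g : seq R -> \bar R) : (forall s, f s = g s) -> gauss_iter N f = gauss_iter N g.
Proof. by move=> fg; rewrite (funext fg). Qed.

Lemma gauss_iter_cst N (c : \bar R) : gauss_iter N (fun _ => c) = c.
Proof. by elim: N => //= N ->; exact: intP_cst. Qed.

Lemma dep_shift S (f : seq R -> \bar R) (x : R) : dep S f -> dep (fun i => S i.+1) (fun s => f (x :: s)).
Proof. by move=> df s s' h; apply: df => -[|i] //= /h. Qed.

Lemma dep_indep0 S (f : seq R -> \bar R) (x y : R) : dep S f -> ~~ S 0%N -> forall s, f (x :: s) = f (y :: s).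
Proof. by move=> df S0 s; apply: df => -[|i] //= S0'; rewrite S0' in S0. Qed.

Lemma gauss_iter_subadd N S (A B : seq R -> \bar R) : dep S A -> dep (predC S) B ->
  (forall s, 0 <= A s) -> (forall s, 0 <= B s) ->
  gauss_iter N (fun s => A s + B s) <= gauss_iter N A + gauss_iter N B.
Proof.
elim: N S A B => [|N IH] S A B dA dB A0 B0 /=; first by [].
case S0: (S 0%N).
- have cB x : gauss_iter N (fun s => B (x :: s)) = gauss_iter N (fun s => B (0%R :: s)).
    apply: gauss_iter_ext => s; apply: (dep_indep0 _ _ _ _ dB); by rewrite /= S0.
  under [X in _ <= _ + X]eq_integral do rewrite cB.
  rewrite intP_cst.
  apply: le_trans; last apply: intP_addc.
  + apply: intP_le => x.
      by apply: gauss_iter_ge0 => s; apply: adde_ge0.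
    rewrite -(cB x); apply: (IH (fun i => S i.+1)) => //.
    * exact: dep_shift.
    * exact: (dep_shift _ _ x dB).
  + by move=> x; apply: gauss_iter_ge0.
  + by apply: gauss_iter_ge0.
- have cA x : gauss_iter N (fun s => A (x :: s)) = gauss_iter N (fun s => A (0%R :: s)).
    apply: gauss_iter_ext => s; apply: (dep_indep0 _ _ _ _ dA); by rewrite S0.
  under [X in _ <= X + _]eq_integral do rewrite cA.
  rewrite intP_cst addeC.
  apply: le_trans; last apply: intP_addc.
  + apply: intP_le => x.
      by apply: gauss_iter_ge0 => s; apply: adde_ge0.
    rewrite -(cA x) addeC; apply: (IH (fun i => S i.+1)) => //.
    * exact: dep_shift.
    * exact: (dep_shift _ _ x dB).
  + by move=> x; apply: gauss_iter_ge0.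
  + by apply: gauss_iter_ge0.
Qed.

Lemma gauss_iter_sum N (r : seq nat) (S : nat -> pred nat) (G : nat -> seq R -> \bar R) :
  uniq r -> (forall j, dep (S j) (G j)) -> (forall j s, 0 <= G j s) ->
  (forall j j' i, j \in r -> j' \in r -> j != j' -> S j i -> ~~ S j' i) ->
  gauss_iter N (fun s => \sum_(j <- r) G j s) <= \sum_(j <- r) gauss_iter N (G j).
Proof.
move=> + dG G0; elim: r => [|j r IH] /=.
  by move=> _ _; rewrite big_nil (gauss_iter_ext _ _ (fun=> 0)) ?gauss_iter_cst // => s; rewrite big_nil.
move=> /andP[jr ur] disj.
rewrite (gauss_iter_ext _ _ (fun s => G j s + \sum_(i <- r) G i s)); last by move=> s; rewrite big_cons.
rewrite big_cons.
apply: le_trans.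
  apply: (gauss_iter_subadd _ (S j)) => //.
  - move=> s s' h; rewrite big_seq [RHS]big_seq; apply: eq_bigr => i ir.
    apply: (dG i) => p Sip; apply: h => /=.
    apply: (disj i j p) => //; first by rewrite inE ir orbT.
      by rewrite inE eqxx.
    by apply/eqP => eij; move: jr; rewrite -eij ir.
  - by move=> s; apply: sume_ge0.
apply: leeD2l; apply: IH => // a b p ar br ab.
by apply: disj => //; rewrite inE ?ar ?br orbT.
Qed.

Lemma map_nth_shift (x : R) s (l : seq nat) : all (fun i => 0 < i)%N l ->
  [seq nth 0%R (x :: s) i | i <- l] = [seq nth 0%R s i | i <- map predn l].
Proof.
elim: l => //= i l IH /andP[i0 al]; rewrite IH //.
by case: i i0.
Qed.

Lemma gauss_iter_marg N (idx : seq nat) (g : seq R -> \bar R) :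
  sorted ltn idx -> all (fun i => i < N)%N idx ->
  gauss_iter N (fun s => g [seq nth 0%R s i | i <- idx]) = gauss_iter (size idx) g.
Proof.
elim: N idx g => [|N IH] idx g.
  by case: idx => //= i idx' _; rewrite ltn0.
move=> hs ha /=.
have predn_ok l : all (fun i => 0 < i)%N l -> sorted ltn l -> all (fun i => i < N.+1)%N l ->
    sorted ltn (map predn l) /\ all (fun i => i < N)%N (map predn l).
  move=> l0 ls lN; split.
    apply: (homo_sorted_in (e := ltn) (P := fun i => 0 < i)%N) => //.
    by move=> [|a] [|b] //.
  rewrite all_map; apply/allP => i il /=.
  have := allP l0 i il; have := allP lN i il; rewrite /=.
  by case: i {il} => //= i; rewrite ltnS.
case: idx hs ha => [|i idx'] hs ha.
  by rewrite /= gauss_iter_cst intP_cst.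
have pos : all (fun k => 0 < k)%N idx'.
  have := hs; rewrite /= (path_sortedE ltn_trans) => /andP[+ _].
  by apply: sub_all => k; apply: leq_ltn_trans.
case: i hs ha => [|i] hs ha.
- have -> : gauss_iter (size (0%N :: idx')) g = \int[P]_x gauss_iter (size idx') (fun s => g (x :: s)) by [].
  congr (integral _ _ _); apply: funext => x.
  have ha' : all (fun i => i < N.+1)%N idx' by case/andP: ha.
  have [h1 h2] := predn_ok idx' pos (path_sorted hs) ha'.
  rewrite -(size_map predn idx') -(IH _ (fun s => g (x :: s))) //.
  by apply: gauss_iter_ext => s /=; rewrite map_nth_shift.
- have pos' : all (fun k => 0 < k)%N (i.+1 :: idx') by rewrite /= pos.
  have [h1 h2] := predn_ok _ pos' hs ha.
  transitivity (\int[P]_x (cst (gauss_iter (size idx').+1 g) x)); last by rewrite intP_cst.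
  congr (integral _ _ _); apply: funext => x.
  have := IH _ g h1 h2; rewrite size_map => <-.
  by apply: gauss_iter_ext => s; rewrite map_nth_shift.
Qed.
End GaussPart.

Section Det.
Variable R : realType.

Lemma sum_shift (F : nat -> R) o b :
  \sum_(o <= c < o + b) F c = \sum_(l < b) F (o + l)%N.
Proof.
rewrite -{1}(add0n o) big_addn addKn big_mkord; apply: eq_bigr => l _.
by rewrite addnC.
Qed.

Lemma sum_sub_ge0 (H : nat -> R) o b n : (forall c, 0 <= H c) -> (o + b <= n)%N ->
  \sum_(l < b) H (o + l)%N <= \sum_(c < n) H c.
Proof.
move=> H0 obn; rewrite -sum_shift -(big_mkord xpredT H).
rewrite [in X in _ <= X](big_cat_nat (n := o)) //=; last exact: leq_trans (leq_addr b o) obn.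
rewrite [in X in _ <= _ + X](big_cat_nat (n := (o + b)%N)) //= ?leq_addr //.
have s0 : forall a c, 0 <= \sum_(a <= i < c) H i by move=> a c; apply: sumr_ge0 => i _; exact: H0.
by rewrite addrCA lerDl addr_ge0.
Qed.

Lemma TVr_nat m p (A : 'M[R]_(m, p.+1)) :
  TVr A = \sum_(i < m) \sum_(0 <= c < p) `|A i (inord c.+1) - A i (inord c)|.
Proof.
rewrite /TVr; apply: eq_bigr => i _.
rewrite big_ord_recr /= [X in _ + X]big_pred0; last first.
  by move=> j; apply/negbTE; rewrite neq_ltn ltnS (leq_ord j).
rewrite addr0 big_mkord; apply: eq_bigr => j _.
rewrite (big_pred1 (inord j.+1)); last first.
  move=> k; rewrite /= -(inj_eq val_inj) /= inordK //; exact: ltn_ord.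
congr (`|_ - _|); congr (A i _); apply: val_inj; rewrite /= inordK //.
exact: leqW (ltn_ord j).
Qed.

Lemma tri_telescope (f : nat -> R) c p : (c <= p)%N ->
  `|f p| <= `|f c| + \sum_(c <= c' < p) `|f c'.+1 - f c'|.
Proof.
elim: p => [|p IH].
  by rewrite leqn0 => /eqP ->; rewrite big_geq ?addr0.
case: (eqVneq c p.+1) => [-> _|ne]; first by rewrite big_geq ?addr0.
move=> cp1; have cp : (c <= p)%N by rewrite -ltnS ltn_neqAle ne cp1.
rewrite big_nat_recr //= addrA.
apply: le_trans (lerD (IH cp) (lexx _)).
by have := ler_normD (f p.+1 - f p) (f p); rewrite subrK addrC.
Qed.


Lemma lastcol_nat m p (A : 'M[R]_(m, p.+1)) :
  lastcol_l1 A = \sum_(i < m) `|A i (inord p)|.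
Proof.
rewrite /lastcol_l1; apply: eq_bigr => i _.
rewrite (big_pred1 (inord p)) // => j /=.
by rewrite -(inj_eq val_inj) /= inordK.
Qed.

Lemma key_prefix m p (A : 'M[R]_(m, p.+1)) (delta : R) :
  TV A <= lastcol_l1 A + delta -> forall c, (c <= p)%N ->
  \sum_(i < m) \sum_(0 <= c' < c) `|A i (inord c'.+1) - A i (inord c')| + TVc A
  <= delta + \sum_(i < m) `|A i (inord c)|.
Proof.
move=> hT c cp; move: hT; rewrite /TV TVr_nat lastcol_nat.
have split_ i : \sum_(0 <= c' < p) `|A i (inord c'.+1) - A i (inord c')| =
   \sum_(0 <= c' < c) `|A i (inord c'.+1) - A i (inord c')| +
   \sum_(c <= c' < p) `|A i (inord c'.+1) - A i (inord c')|.
  by rewrite (big_cat_nat (n := c)).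
rewrite (eq_bigr _ (fun i _ => split_ i)) big_split /=.
have tri : \sum_(i < m) `|A i (inord p)| <= \sum_(i < m) `|A i (inord c)| +
   \sum_(i < m) \sum_(c <= c' < p) `|A i (inord c'.+1) - A i (inord c')|.
  rewrite -big_split /=; apply: ler_sum => i _.
  exact: (tri_telescope (fun c => A i (inord c))).
move: tri.
set X := \sum_(i < m) \sum_(0 <= c' < c) _.
set Y := \sum_(i < m) \sum_(c <= c' < p) _.
set L := \sum_(i < m) `|A i (inord p)|.
set C := \sum_(i < m) `|A i (inord c)|.
move=> h1 h2; lra.
Qed.


Lemma cs_fin (I : finType) (a : I -> R) :
  (\sum_i a i) ^+ 2 <= #|I|%:R * \sum_i a i ^+ 2.
Proof.
set S := \sum_i a i ^+ 2.
have e1 : (\sum_i a i) ^+ 2 = \sum_i \sum_j a i * a j.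
  by rewrite expr2 mulr_suml; apply: eq_bigr => i _; rewrite mulr_sumr.
have e2 : \sum_i \sum_j (a i ^+ 2 + a j ^+ 2) = 2 * (#|I|%:R * S).
  rewrite (eq_bigr (fun i => a i ^+ 2 *+ #|I| + S)); last first.
    by move=> i _; rewrite big_split /= sumr_const.
  rewrite big_split /= sumr_const sumrMnl -/S -mulr_natl; ring.
have e3 : 2 * \sum_i \sum_j a i * a j <= \sum_i \sum_j (a i ^+ 2 + a j ^+ 2).
  rewrite mulr_sumr; apply: ler_sum => i _; rewrite mulr_sumr; apply: ler_sum => j _.
  have := sqr_ge0 (a i - a j); nra.
rewrite e1; move: e3; rewrite e2; set T := \sum_i _; set U := _ * S; lra.
Qed.

Lemma le_sqrt_of_sqr (x y : R) : 0 <= x -> x ^+ 2 <= y -> x <= Num.sqrt y.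
Proof.
move=> x0 xy; rewrite -(ger0_norm x0) -sqrtr_sqr; exact: ler_wsqrtr.
Qed.

Lemma block_l1 m p (A : 'M[R]_(m, p.+1)) c0 b : (c0 + b <= p.+1)%N ->
  \sum_(l < b) \sum_(i < m) `|A i (inord (c0 + l))| <= Num.sqrt ((m * b)%:R) * frob A.
Proof.
move=> cb.
set a : 'I_b * 'I_m -> R := fun q => `|A q.2 (inord (c0 + q.1))|.
have e1 : \sum_(l < b) \sum_(i < m) `|A i (inord (c0 + l))| = \sum_q a q by rewrite pair_bigA.
have e2 : \sum_q a q ^+ 2 <= \sum_(i < m) \sum_(j < p.+1) A i j ^+ 2.
  rewrite -(pair_bigA _ (fun l i => a (l, i) ^+ 2)) /= exchange_big /=.
  apply: ler_sum => i _.
  have -> : \sum_(j < p.+1) A i j ^+ 2 = \sum_(j < p.+1) (fun c => A i (inord c) ^+ 2) j.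
    by apply: eq_bigr => j _; rewrite inord_val.
  under eq_bigr do rewrite /a /= real_normK ?num_real //.
  apply: (sum_sub_ge0 (fun c => A i (inord c) ^+ 2)) => // c; exact: sqr_ge0.
have F0 : 0 <= \sum_(i < m) \sum_(j < p.+1) A i j ^+ 2.
  by apply: sumr_ge0 => i _; apply: sumr_ge0 => j _; exact: sqr_ge0.
rewrite e1 /frob -sqrtrM ?ler0n //.
apply: le_sqrt_of_sqr; first by apply: sumr_ge0 => q _; exact: normr_ge0.
apply: le_trans (cs_fin _ a) _.
rewrite card_prod !card_ord mulnC; apply: ler_wpM2l => //.
Qed.


Lemma average m p (A : 'M[R]_(m, p.+1)) (X delta t : R) c0 b :
  (0 < b)%N -> (c0 + b <= p.+1)%N -> frob A <= t ->
  (forall l, (l < b)%N -> X <= delta + \sum_(i < m) `|A i (inord (c0 + l))|) ->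
  X <= t * Num.sqrt (m%:R / b%:R) + delta.
Proof.
move=> b0 cb hA hX.
have h1 : b%:R * X <= b%:R * delta + Num.sqrt ((m * b)%:R) * t.
  have -> : b%:R * X = \sum_(l < b) X by rewrite sumr_const card_ord mulr_natl.
  have -> : b%:R * delta = \sum_(l < b) delta by rewrite sumr_const card_ord mulr_natl.
  apply: le_trans (_ : \sum_(l < b) (delta + \sum_(i < m) `|A i (inord (c0 + l))|) <= _).
    by apply: ler_sum => l _; apply: hX.
  rewrite big_split /= lerD2l; apply: le_trans (block_l1 _ _ A c0 b cb) _.
  by apply: ler_wpM2l => //; exact: sqrtr_ge0.
have bR : 0 < b%:R :> R by rewrite ltr0n.
have hs : Num.sqrt ((m * b)%:R) = Num.sqrt (m%:R / b%:R) * b%:R :> R.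
  have -> : (m * b)%:R = m%:R / b%:R * b%:R ^+ 2 :> R.
    by rewrite natrM; field; rewrite gt_eqF.
  rewrite sqrtrM ?sqrtr_sqr ?ger0_norm ?divr_ge0 ?ler0n //; exact: ltW.
rewrite hs in h1.
have : b%:R * X <= b%:R * (t * Num.sqrt (m%:R / b%:R) + delta).
  by move: h1; set s := Num.sqrt _; move=> h1; rewrite mulrDr; lra.
by rewrite ler_pM2l.
Qed.


Definition blockm m p (A : 'M[R]_(m, p.+1)) o b : 'M[R]_(m, b) :=
  \matrix_(i, l) A i (inord (o + l)).
Arguments blockm {m p} A o b.

Lemma TVc_A_le m p (A : 'M[R]_(m, p.+1)) (delta t : R) :
  TV A <= lastcol_l1 A + delta -> frob A <= t ->
  TVc A <= t * Num.sqrt (m%:R / p.+1%:R) + delta.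
Proof.
move=> hT hF; apply: (average _ _ A _ _ _ 0 p.+1) => // l lp.
have := key_prefix _ _ A _ hT l lp; rewrite add0n.
apply: le_trans; rewrite lerDr; apply: sumr_ge0 => i _; apply: sumr_ge0 => c _.
exact: normr_ge0.
Qed.

Lemma TVc_block_le m p (A : 'M[R]_(m, p.+1)) o b : (o + b <= p.+1)%N ->
  TVc (blockm A o b) <= TVc A.
Proof.
move=> ob; rewrite /TVc /TVr.
set H := fun c : nat => \sum_(j1 < m) \sum_(j2 < m | val j2 == (val j1).+1)
   `|A j2 (inord c) - A j1 (inord c)|.
have -> : \sum_(i < b) \sum_(j1 < m) \sum_(j2 < m | val j2 == (val j1).+1)
   `|(blockm A o b)^T i j2 - (blockm A o b)^T i j1| = \sum_(l < b) H (o + l)%N.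
  by apply: eq_bigr => l _; apply: eq_bigr => j1 _; apply: eq_bigr => j2 _; rewrite !mxE.
have -> : \sum_(i < p.+1) \sum_(j1 < m) \sum_(j2 < m | val j2 == (val j1).+1)
   `|A^T i j2 - A^T i j1| = \sum_(c < p.+1) H c.
  apply: eq_bigr => c _; apply: eq_bigr => j1 _; apply: eq_bigr => j2 _.
  by rewrite !mxE inord_val.
apply: sum_sub_ge0 => // c; apply: sumr_ge0 => j1 _; apply: sumr_ge0 => j2 _.
exact: normr_ge0.
Qed.

Lemma frob_block_le m p (A : 'M[R]_(m, p.+1)) o b : (o + b <= p.+1)%N ->
  frob (blockm A o b) <= frob A.
Proof.
move=> ob; rewrite /frob; apply: ler_wsqrtr; apply: ler_sum => i _.
have -> : \sum_(j < p.+1) A i j ^+ 2 = \sum_(j < p.+1) (fun c => A i (inord c) ^+ 2) j.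
  by apply: eq_bigr => j _; rewrite inord_val.
under eq_bigr do rewrite mxE.
apply: (sum_sub_ge0 (fun c => A i (inord c) ^+ 2)) => // c; exact: sqr_ge0.
Qed.

Lemma TVr_block_le m p (A : 'M[R]_(m, p.+1)) (delta t : R) o b :
  TV A <= lastcol_l1 A + delta -> frob A <= t -> (0 < b)%N -> (o + b + b <= p.+2)%N ->
  TVr (blockm A o b) <= t * Num.sqrt (m%:R / b%:R) + delta.
Proof.
case: b => // b' hT hF _ hob.
rewrite TVr_nat.
set d := fun i c => `|A i (inord c.+1) - A i (inord c)|.
have -> : \sum_(i < m) \sum_(0 <= c < b') `|blockm A o b'.+1 i (inord c.+1) - blockm A o b'.+1 i (inord c)|
   = \sum_(i < m) \sum_(l < b') d i (o + l)%N.
  apply: eq_bigr => i _; rewrite big_mkord; apply: eq_bigr => l _.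
  rewrite !mxE /d !inordK ?addnS //; first exact: ltnW (ltn_ord l).
  by rewrite ltnS (ltn_ord l).
apply: (average _ _ A _ _ _ (o + b')%N b'.+1) => //.
  by lia.
move=> l lb.
have cp : (o + b' + l <= p)%N.
  by lia.
have hk := key_prefix _ _ A _ hT _ cp.
have hsub : \sum_(i < m) \sum_(l' < b') d i (o + l')%N <=
    \sum_(i < m) \sum_(0 <= c' < o + b' + l) d i c'.
  apply: ler_sum => i _; rewrite big_mkord; apply: (sum_sub_ge0 (d i)).
    by move=> c; exact: normr_ge0.
  exact: leq_addr.
have tvc0 : 0 <= TVc A.
  rewrite /TVc /TVr; apply: sumr_ge0 => i _; apply: sumr_ge0 => j _; apply: sumr_ge0 => k _.
  exact: normr_ge0.
apply: le_trans hsub _; apply: le_trans _ hk; by rewrite lerDl.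
Qed.


Lemma block_in m p (A : 'M[R]_(m, p.+1)) (delta t : R) o b :
  Mright m p.+1 delta t A -> (0 < b)%N -> (o + b + b <= p.+2)%N -> 0 <= t ->
  Aset m b (2 * t * Num.sqrt (m%:R / b%:R) + delta)
           (t * Num.sqrt (m%:R / p.+1%:R) + delta) t (blockm A o b).
Proof.
move=> [hT hF] b0 hob t0.
have ob : (o + b <= p.+1)%N by lia.
split; last split.
- apply: le_trans (TVr_block_le _ _ A _ _ _ _ hT hF b0 hob) _.
  rewrite lerD2r -mulrA ler_peMl //; last by rewrite ler1n.
  by rewrite mulr_ge0 // sqrtr_ge0.
- exact: le_trans (TVc_block_le _ _ A _ _ ob) (TVc_A_le _ _ A _ _ hT hF).
- exact: le_trans (frob_block_le _ _ A _ _ ob) hF.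
Qed.

Lemma TVr0 m n : TVr (0 : 'M[R]_(m, n)) = 0.
Proof. by rewrite /TVr big1 // => i _; rewrite big1 // => j _; rewrite big1 // => l _; rewrite !mxE subrr normr0. Qed.

Lemma frob0 m n : frob (0 : 'M[R]_(m, n)) = 0.
Proof. by rewrite /frob big1 ?sqrtr0 // => i _; rewrite big1 // => j _; rewrite mxE expr0n. Qed.

Lemma inner0 m n (Z : 'M[R]_(m, n)) : frob_inner Z 0 = 0.
Proof. by rewrite /frob_inner big1 // => i _; rewrite big1 // => j _; rewrite mxE mulr0. Qed.

Lemma partition_sum (E : nat -> nat) (h : nat -> R) K :
  (forall x y, (x <= y)%N -> (E y <= E x)%N) ->
  \sum_(E K <= c < E 0%N) h c = \sum_(j <- iota 0 K) \sum_(E j.+1 <= c < E j) h c.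
Proof.
move=> Emon; elim: K => [|K IH]; first by rewrite big_geq // big_nil.
rewrite -addn1 iotaD big_cat /= big_seq1 add0n addn1 -IH addrC.
rewrite -(big_cat_nat (n := E K)) //; [exact: Emon (leqnSn K)| exact: Emon (leq0n K)].
Qed.

End Det.

Arguments blockm {R m p} A o b.

Section Split.
Variable R : realType.

Lemma inner_split m p (s : seq R) (A : 'M[R]_(m, p.+1)) (E o b : nat -> nat) K :
  (forall x y, (x <= y)%N -> (E y <= E x)%N) -> E 0%N = p.+1 -> E K = 0%N ->
  (forall j, (j < K)%N -> o j = E j.+1 /\ (o j + b j)%N = E j) ->
  frob_inner (mx_of_seq m p.+1 s) A =
  \sum_(j <- iota 0 K) frob_inner (mx_of_seq m (b j) [seq nth 0 s i | i <- idxl m p.+1 (o j) (b j)])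
                                  (blockm A (o j) (b j)).
Proof.
move=> Emon E0 EK hob.
rewrite /frob_inner.
have -> : \sum_(j <- iota 0 K) \sum_(i < m) \sum_(l < b j)
    (mx_of_seq m (b j) [seq nth 0 s i | i <- idxl m p.+1 (o j) (b j)]) i l * (blockm A (o j) (b j)) i l
  = \sum_(j <- iota 0 K) \sum_(i < m) \sum_(l < b j)
    (nth 0 s (i * p.+1 + (o j + l)) * A i (inord (o j + l))).
  apply: eq_bigr => j _; apply: eq_bigr => i _; apply: eq_bigr => l _.
  rewrite !mxE (nth_map 0%N); last first.
    rewrite size_mkseq; apply: leq_trans (_ : (i.+1 * b j <= m * b j)%N).
      by rewrite mulSn; have := ltn_ord l; lia.
    by rewrite leq_mul2r ltn_ord orbT.
  by rewrite idxl_nth // addnA.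
rewrite [RHS]exchange_big /=; apply: eq_bigr => i _.
set h := fun c => nth 0 s (i * p.+1 + c) * A i (inord c).
have -> : \sum_(j < p.+1) (mx_of_seq m p.+1 s) i j * A i j = \sum_(c < p.+1) h c.
  by apply: eq_bigr => c _; rewrite /h mxE inord_val.
rewrite -(big_mkord xpredT h) -{1}E0 -[X in \sum_(X <= _ < _) _]EK partition_sum //.
rewrite big_seq [RHS]big_seq; apply: eq_bigr => j; rewrite mem_iota add0n => /andP[_ jK].
have [oj objE] := hob j jK.
by rewrite -objE oj sum_shift.
Qed.

End Split.

Lemma pow_sum K : ((\sum_(j < K) 2 ^ j).+1 = 2 ^ K)%N.
Proof.
elim: K => [|K IH]; first by rewrite big_ord0.
by rewrite big_ord_recr /= -addSn IH expnS; lia.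
Qed.

Theorem lemma5p15 (R : realType) (m n : nat) (delta t : R) (k : nat)
  (hm : (0 < m)%N) (hn : (0 < n)%N) (hdelta : 0 < delta) (ht : 0 < t)
  (hk : (n <= \sum_(j < k.+1) 2 ^ j)%N)
  (hkmin : forall k' : nat, (n <= \sum_(j < k'.+1) 2 ^ j)%N -> (k <= k')%N) :
  (GW (Mright m n delta t) <=
   \sum_(j < k.+1)
     GW (Aset m (blk n k j)
           (2 * t * Num.sqrt (m%:R / (blk n k j)%:R) + delta)
           (t * Num.sqrt (m%:R / n%:R) + delta) t))%E.
Proof.
case: n hn hk hkmin => // p _ hk hkmin.
have hup : (p.+1 < 2 ^ k.+1)%N by move: hk; rewrite -ltnS pow_sum.
have hlo : (2 ^ k <= p.+1)%N.
  case: k hk hkmin hup => [|k'] hk hkmin hup; first by rewrite expn0.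
  rewrite leqNgt; apply/negP => h.
  have := hkmin k'; rewrite -ltnS pow_sum => /(_ h); lia.
pose E := fun j => (p.+1 - (2 ^ j - 1))%N.
pose o := fun j => E j.+1.
pose b := fun j => blk p.+1 k j.
have hb : forall j, (j < k.+1)%N ->
    [/\ (0 < b j)%N, (o j + b j = E j)%N & (o j + b j + b j <= p.+2)%N].
  move=> j jk; rewrite /b /o /E /blk.
  case: (ltnP j k) => jk'.
  - have h1 : (2 ^ j.+1 <= 2 ^ k)%N by rewrite leq_exp2l.
    have h2 : (2 ^ j.+1 = 2 * 2 ^ j)%N by rewrite expnS.
    have h3 : (0 < 2 ^ j)%N by rewrite expn_gt0.
    by split; lia.
  - have ejk : j = k by lia.
    rewrite ejk.
    have h2 : (2 ^ k.+1 = 2 * 2 ^ k)%N by rewrite expnS.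
    have h3 : (0 < 2 ^ k)%N by rewrite expn_gt0.
    by split; lia.
have Emon : forall x y, (x <= y)%N -> (E y <= E x)%N.
  by move=> x y xy; rewrite /E leq_sub2l // leq_sub2r // leq_exp2l.
have E0 : E 0%N = p.+1 by rewrite /E expn0 subnn subn0.
have EK : E k.+1 = 0%N by rewrite /E; lia.
have t0 : 0 <= t by exact: ltW.
pose U j := (2 * t * Num.sqrt (m%:R / (b j)%:R) + delta).
pose V := (t * Num.sqrt (m%:R / p.+1%:R) + delta).
pose g j := fun s : seq R => ereal_sup [set (frob_inner (mx_of_seq m (b j) s) v)%:E | v in Aset m (b j) (U j) V t].
pose idx j := idxl m p.+1 (o j) (b j).
pose G j := fun s : seq R => g j [seq nth 0 s i | i <- idx j].
have zeroA : forall j, Aset m (b j) (U j) V t 0.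
  move=> j; split; last split.
  - rewrite TVr0 /U; apply: addr_ge0; last exact: ltW.
    by apply: mulr_ge0; [apply: mulr_ge0 | exact: sqrtr_ge0].
  - rewrite /TVc trmx0 TVr0 /V; apply: addr_ge0; last exact: ltW.
    by apply: mulr_ge0; [ | exact: sqrtr_ge0].
  - by rewrite frob0.
have G0 : forall j s, (0 <= G j s)%E.
  move=> j s; apply: ereal_sup_ubound; exists 0 => //; by rewrite inner0.
have eR : \sum_(j < k.+1) GW (Aset m (blk p.+1 k j)
           (2 * t * Num.sqrt (m%:R / (blk p.+1 k j)%:R) + delta)
           (t * Num.sqrt (m%:R / p.+1%:R) + delta) t) =
    \sum_(j <- iota 0 k.+1) gauss_iter (m * p.+1) (G j).
  rewrite -(big_mkord xpredT (fun j => GW (Aset m (b j) (U j) V t))) /index_iota subn0.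
  rewrite big_seq [RHS]big_seq; apply: eq_bigr => j; rewrite mem_iota add0n => /andP[_ jk].
  have [b0 obE obb] := hb j jk.
  have obn : (o j + b j <= p.+1)%N by lia.
  by rewrite /G gauss_iter_marg ?size_mkseq //; [exact: idxl_sorted | exact: idxl_all].
rewrite eR /GW.
have hob : forall j, (j < k.+1)%N -> o j = E j.+1 /\ (o j + b j)%N = E j.
  by move=> j jk; have [_ obE _] := hb j jk.
apply: le_trans; last apply: (gauss_iter_sum _ _ _ (fun j i => i \in idx j)).
- apply: gauss_iter_le.
    move=> s; apply: ereal_sup_ubound; exists 0; last by rewrite inner0.
    split; last by rewrite frob0.
    by rewrite /TV /TVc trmx0 !TVr0 addr0 /lastcol_l1 big1 ?add0r ?ltW // => i _; rewrite big1 // => c _; rewrite mxE normr0.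
  move=> s; apply: ge_ereal_sup => _ [th hth <-].
  rewrite (@inner_split R m p s th E o b k.+1 Emon E0 EK hob) -sumEFin.
  rewrite big_seq [X in (_ <= X)%E]big_seq; apply: lee_sum => j; rewrite mem_iota add0n => /andP[_ jk].
  have [b0 obE obb] := hb j jk.
  apply: ereal_sup_ubound; exists (blockm th (o j) (b j)) => //.
  exact: block_in.
- exact: iota_uniq.
- move=> j s s' h; rewrite /G; by congr (g j _); apply/eq_in_map => i /h.
- exact: G0.
- move=> j j' i; rewrite !mem_iota !add0n => /andP[_ jk] /andP[_ j'k] jj' ij.
  apply/negP => ij'.
  have [b0 obE _] := hb j jk; have [b0' obE' _] := hb j' j'k.
  have obn : (o j + b j <= p.+1)%N by rewrite obE -E0; apply: Emon.
  have obn' : (o j' + b j' <= p.+1)%N by rewrite obE' -E0; apply: Emon.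
  have := idxl_mem _ _ _ _ _ b0 obn ij.
  have := idxl_mem _ _ _ _ _ b0' obn' ij'.
  have oj : o j = E j.+1 by [].
  have oj' : o j' = E j'.+1 by [].
  case: (ltngtP j j') => hjj.
  - have := Emon _ _ hjj; lia.
  - have := Emon _ _ hjj; lia.
  - by rewrite hjj eqxx in jj'.
Qed.
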